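(* Under the assumptions of the approximation theorem (open convex $\mathcal D$, $K\in\mathbb{Z}_{\ge2}$, each $L^{(n)}$ is $2K$ times continuously differentiable on $\mathcal D$ with derivatives up to order $2K$ bounded uniformly in $n$), there is a constant $C$ (depending on $K$, $\beta$ and the derivative bounds only) such that for all $\theta\in\mathcal D$, all $m\in[1,K]$, all $r\in[0,2K-m]$, all $n\ge0$ and all $a\in[1,n]$: $$\|\nabla^rc_m^{(n)}(\theta)\|\le C,\qquad\|\nabla^rp_m^{(n,a)}(\theta)\|\le C\,a^m.$$
   Context: Fix $\beta\in(0,1)$. $[a,b]$ denotes $[a,b]\cap\mathbb{Z}$; empty sums are $0$. $\nabla^kF(\theta)$ is the $k$-th derivative (symmetric $k$-linear map), $\nabla^0F=F$, and $[u_1^{\times r_1},\dots]$ means $u_1$ repeated $r_1$ times, etc. For integers $i,l\ge0$, $\mathcal K_{i,l}:=\{(k_0,\dots,k_l)\in\mathbb{Z}_{\ge0}^{l+1}:\ k_0+\dots+k_l=i,\ \sum_{j=1}^l jk_j=l\}$. Given losses $L^{(s)}:\mathcal D\to\mathbb{R}$, $s\ge0$, the memoryless coefficients and history terms are defined recursively by $c_1^{(n)}(\theta)=-\sum_{k=0}^n\beta^k\nabla L^{(n-k)}(\theta)$, $$c_m^{(n)}(\theta)=-\sum_{k=1}^n\beta^k\sum_{\substack{i,l\ge0\\ i+l=m-1}}\sum_{(i_0,\dots,i_l)\in\mathcal K_{i,l}}\frac{1}{i_0!\cdots i_l!}\nabla^{i+1}L^{(n-k)}(\theta)\big[p_1^{(n,k)}(\theta)^{\times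 i_0},\dots,p_{l+1}^{(n,k)}(\theta)^{\times i_l}\big],\ m\ge2,$$ $$p_m^{(n,a)}(\theta)=-\sum_{s=1}^a\sum_{\substack{j\ge1,\,i,l\ge0\\ i+j+l=m}}\sum_{(k_0,\dots,k_l)\in\mathcal K_{i,l}}\frac{1}{k_0!\cdots k_l!}\nabla^{i}c_j^{(n-s)}(\theta)\big[p_1^{(n,s)}(\theta)^{\times k_0},\dots,p_{l+1}^{(n,s)}(\theta)^{\times k_l}\big]$$ for $m\ge1$, $a\in[1,n]$. *)

(* Defs.v *)
From HB Require Import structures.
From mathcomp Require Import all_boot all_order all_algebra.
From mathcomp Require Import all_classical all_reals all_analysis.
Set Implicit Arguments.
Unset Strict Implicit.
Unset Printing Implicit Defensive.
Import Order.TTheory GRing.Theory Num.Theory.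
Import numFieldNormedType.Exports.
Local Open Scope classical_set_scope.
Local Open Scope ring_scope.

Section Defs.
Variable R : realType.
Variable d : nat.
Notation V := 'rV[R]_d.

(* Iterated directional derivative:
   dirDer [:: u1; ...; uk] F theta = D_{u1} ... D_{uk} F (theta),
   i.e. nabla^k F(theta)[u1,...,uk] for a C^k function F. *)
Fixpoint dirDer (W : normedModType R) (us : seq V) (f : V -> W) : V -> W :=
  match us with
  | [::] => f
  | u :: us' => 'D_u (dirDer us' f)
  end.

Definition enorm (u : V) : R := Num.sqrt (\sum_(q < d) (u ord0 q) ^+ 2).

Definition grad (f : V -> R) (theta : V) : V :=
  \row_(q < d) 'D_(delta_mx ord0 q : V) f theta.

Definition convexD (D : set V) : Prop :=
  forall x y, D x -> D y -> forall t : R, 0 <= t <= 1 ->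
    D ((1 - t) *: x + t *: y).

Definition CkOn (k : nat) (D : set V) (f : V -> R) : Prop :=
  (forall us : seq V, (size us < k)%N -> forall theta, D theta ->
      differentiable (dirDer us f) theta) /\
  (forall us : seq V, (size us <= k)%N -> forall theta, D theta ->
      {for theta, continuous (dirDer us f)}).

Definition Kset (i l : nat) : pred {ffun 'I_l.+1 -> 'I_i.+1} :=
  fun kk => ((\sum_(j < l.+1) (kk j : nat)) == i)%N &&
            ((\sum_(j < l.+1) (j : nat) * kk j) == l)%N.

Definition kcoef (i l : nat) (kk : {ffun 'I_l.+1 -> 'I_i.+1}) : R :=
  ((\prod_(j < l.+1) (kk j)`!)%:R)^-1.

Definition dirs (i l : nat) (kk : {ffun 'I_l.+1 -> 'I_i.+1}) (P : nat -> V)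
  : seq V := flatten [seq nseq (kk j) (P (j : nat).+1) | j <- enum 'I_l.+1].

Variable beta : R.
Variable L : nat -> V -> R.

Definition c1 (n : nat) : V -> V := fun theta =>
  - \sum_(k < n.+1) (beta ^+ k) *: grad (L (n - k)%N) theta.

(* c_m^{(n)}, m >= 2, given the table P j n a = p_j^{(n,a)} *)
Definition cnext (m : nat) (P : nat -> nat -> nat -> V -> V) (n : nat)
  : V -> V := fun theta =>
  - \sum_(1 <= k < n.+1) (beta ^+ k) *:
      \sum_(i < m) \sum_(kk : {ffun 'I_(m.-1 - i)%N.+1 -> 'I_i.+1}
                           | Kset kk)
         kcoef kk *: grad (dirDer (dirs kk (fun j => P j n k theta))
                                 (L (n - k)%N)) theta.

(* p_m^{(n,a)}, given the tables C j n = c_j^{(n)} and P *)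
Definition pnext (m : nat) (C : nat -> nat -> V -> V)
  (P : nat -> nat -> nat -> V -> V) (n a : nat) : V -> V := fun theta =>
  - \sum_(1 <= s < a.+1) \sum_(1 <= j < m.+1) \sum_(i < (m - j)%N.+1)
      \sum_(kk : {ffun 'I_(m - j - i)%N.+1 -> 'I_i.+1} | Kset kk)
         kcoef kk *: dirDer (dirs kk (fun q => P q n s theta)) (C j (n - s)%N) theta.

(* stage m computes the tables of c_j, p_j for all j <= m (0 beyond);
   c_m only uses p_j with j < m, and p_m only uses c_j with j <= m and
   p_j with j < m (with nonzero multiplicity). *)
Fixpoint stage (m : nat)
  : (nat -> nat -> V -> V) * (nat -> nat -> nat -> V -> V) :=
  match m with
  | 0 => (fun _ _ _ => 0, fun _ _ _ _ => 0)
  | m'.+1 =>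
      let: (Cp, Pp) := stage m' in
      let cm := if m' == 0%N then c1 else cnext m'.+1 Pp in
      let C := fun j => if j == m'.+1 then cm else Cp j in
      let pm := pnext m'.+1 C Pp in
      (C, fun j => if j == m'.+1 then pm else Pp j)
  end.

Definition cmem (m n : nat) : V -> V := (stage m).1 m n.
Definition phist (m n a : nat) : V -> V := (stage m).2 m n a.

End Defs.

(* Main.v *)
Require Import Defs.
From HB Require Import structures.
From mathcomp Require Import all_boot all_order all_algebra.
From mathcomp Require Import all_classical all_reals all_analysis.
From mathcomp Require Import ring lra zify.
Import Order.TTheory GRing.Theory Num.Theory.
Import numFieldNormedType.Exports.
Local Open Scope classical_set_scope.
Local Open Scope ring_scope.
Set Implicit Arguments.
Unset Strict Implicit.

Lemma diff_zero_near (R : realType) (V W : normedModType R) (h : V -> W) x :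
  (\near x, h x = 0) -> differentiable h x.
Proof.
move=> hn.
apply/diffP; rewrite /diff.
set P := (fun df : {linear V -> W} => _).
suff PP : P (get P) by [].
apply: getPex; exists ('d (cst (0:W)) x); rewrite /P; split.
  by rewrite diff_cst; exact: cst_continuous.
rewrite diff_cst lim_id /=.
have E : h = (fun y => h x + (0 : V -> W) (y - x)) +o_ x (fun y => y - x).
  apply/eqaddoP => e e0; near=> y.
  have -> : (h - (fun y0 : V => h x + (0 : V -> W) (y0 - x))) y = h y - (h x + 0) by [].
  rewrite (near hn y) // (nbhs_singleton hn) !addr0 subrr normr0.
  by rewrite mulr_ge0 // ltW.
by move=> y; rewrite {1}E.
exact: norm_hausdorff.
Unshelve. all: by end_near.
Qed.

Lemma diff_near (R : realType) (V W : normedModType R) (f g : V -> W) x :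
  (\near x, f x = g x) -> differentiable f x -> differentiable g x.
Proof.
move=> fg df.
have -> : g = f + (g - f) by apply/funext => y /=; rewrite addrC subrK.
apply: differentiableD => //; apply: diff_zero_near.
near=> y; have -> : (g - f) y = g y - f y by [].
by rewrite (near fg y) // subrr.
Unshelve. all: by end_near.
Qed.

Section Lists.
Variables (T A : Type).

Lemma size_flat_nseq (r : seq T) (g : T -> nat) (x : T -> A) :
  size (flatten [seq nseq (g t) (x t) | t <- r]) = (\sum_(t <- r) g t)%N.
Proof. by elim: r => [|t r IH]; rewrite ?big_nil ?big_cons //= size_cat size_nseq IH. Qed.

Lemma map_flat_nseq (B : Type) (h : A -> B) (r : seq T) (g : T -> nat) (x : T -> A) :
  map h (flatten [seq nseq (g t) (x t) | t <- r]) =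
  flatten [seq nseq (g t) (h (x t)) | t <- r].
Proof. by elim: r => [|t r IH] //=; rewrite map_cat map_nseq IH. Qed.

Lemma prod_flat_nseq (R : comPzRingType) (r : seq T) (g : T -> nat) (x : T -> A) (F : A -> R) :
  \prod_(p <- flatten [seq nseq (g t) (x t) | t <- r]) F p = \prod_(t <- r) F (x t) ^+ g t.
Proof.
elim: r => [|t r IH]; rewrite ?big_nil ?big_cons //= big_cat IH /=; congr (_ * _).
by elim: (g t) => [|n IHn]; rewrite ?big_nil //= big_cons IHn exprS.
Qed.

End Lists.

Lemma mem_flat_nseq (T : Type) (A : eqType) (r : seq T) (g : T -> nat) (x : T -> A) p :
  p \in flatten [seq nseq (g t) (x t) | t <- r] ->
  exists t, (0 < g t)%N /\ p = x t.
Proof.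
elim: r => [|t r IH] //=; rewrite mem_cat => /orP[|/IH //].
by rewrite mem_nseq => /andP[g0 /eqP->]; exists t.
Qed.

Section Calc.
Context {R : realType} {d : nat}.
Local Notation V := 'rV[R]_d.
Variable D : set V.
Hypothesis oD : open D.

Lemma nearD x : D x -> \forall y \near x, D y.
Proof. by move=> Dx; move: oD; rewrite openE => /(_ x Dx). Qed.

Definition eqD {W : normedModType R} (f g : V -> W) := forall x, D x -> f x = g x.

Lemma eqD_near {W : normedModType R} (f g : V -> W) x :
  eqD f g -> D x -> \near x, f x = g x.
Proof.
move=> fg Dx; near=> y; apply: fg; near: y; exact: nearD.
Unshelve. all: by end_near.
Qed.

Lemma derive_loc {W : normedModType R} (f g : V -> W) u :
  eqD f g -> eqD ('D_u f) ('D_u g).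
Proof. by move=> fg x Dx; apply: near_eq_derive; exact: eqD_near. Qed.

Lemma diff_loc {W : normedModType R} (f g : V -> W) x :
  eqD f g -> D x -> differentiable f x -> differentiable g x.
Proof. by move=> fg Dx; apply: diff_near; exact: eqD_near. Qed.

Lemma dirDer_cat {W : normedModType R} us vs (f : V -> W) :
  dirDer (us ++ vs) f = dirDer us (dirDer vs f).
Proof. by elim: us => //= u us ->. Qed.

Lemma dirDer_rcons {W : normedModType R} us u (f : V -> W) :
  dirDer (rcons us u) f = dirDer us ('D_u f).
Proof. by rewrite -cats1 dirDer_cat. Qed.

Lemma dirDer_loc {W : normedModType R} us (f g : V -> W) :
  eqD f g -> eqD (dirDer us f) (dirDer us g).
Proof. by elim: us => //= u us IH fg; apply: derive_loc; apply: IH. Qed.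

Definition sm {W : normedModType R} N (f : V -> W) :=
  forall us : seq V, (size us < N)%N -> forall x, D x ->
    differentiable (dirDer us f) x.
Definition unit_seq (us : seq V) := forall u, u \in us -> enorm u <= 1.
Definition bd N B (f : V -> R) :=
  forall us : seq V, (size us <= N)%N -> unit_seq us -> forall x, D x ->
    `|dirDer us f x| <= B.
Definition cl N B f := sm N f /\ bd N B f.

Lemma sm_loc {W : normedModType R} N (f g : V -> W) : eqD f g -> sm N f -> sm N g.
Proof.
move=> fg sf us Hus x Dx; apply: (@diff_loc _ (dirDer us f)) => //.
  exact: dirDer_loc.
exact: sf.
Qed.

Lemma bd_loc N B (f g : V -> R) : eqD f g -> bd N B f -> bd N B g.
Proof.
by move=> fg bf us Hus uu x Dx; rewrite -(@dirDer_loc _ us f g fg x Dx); apply: bf.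
Qed.

Lemma cl_loc N B (f g : V -> R) : eqD f g -> cl N B f -> cl N B g.
Proof. by move=> fg [s b]; split; [apply: sm_loc s|apply: bd_loc b]. Qed.

Lemma sm_le {W : normedModType R} N' N (f : V -> W) : (N' <= N)%N -> sm N f -> sm N' f.
Proof. by move=> le s us Hus; apply: s; apply: leq_trans le. Qed.

Lemma bd_le N' N B (f : V -> R) : (N' <= N)%N -> bd N B f -> bd N' B f.
Proof. by move=> le s us Hus; apply: s; apply: leq_trans le. Qed.

Lemma bd_leB N B B' (f : V -> R) : B <= B' -> bd N B f -> bd N B' f.
Proof. by move=> le s us Hus uu x Dx; apply: le_trans le; apply: s. Qed.

Lemma cl_le N' N B B' (f : V -> R) : (N' <= N)%N -> B <= B' -> cl N B f -> cl N' B' f.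
Proof.
move=> le1 le2 [s b]; split; first exact: sm_le s.
by apply: bd_le le1 _; apply: bd_leB b.
Qed.

Lemma sm_D {W : normedModType R} N (f : V -> W) u : sm N.+1 f -> sm N ('D_u f).
Proof.
by move=> s us Hus x Dx; rewrite -dirDer_rcons; apply: s; rewrite // size_rcons.
Qed.

Lemma unit_rcons us u : unit_seq us -> enorm u <= 1 -> unit_seq (rcons us u).
Proof.
by move=> H Hu v; rewrite mem_rcons in_cons => /orP[/eqP->|/H].
Qed.

Lemma bd_D N B (f : V -> R) u : bd N.+1 B f -> enorm u <= 1 -> bd N B ('D_u f).
Proof.
move=> s Hu us Hus uu x Dx; rewrite -dirDer_rcons; apply: s => //.
  by rewrite size_rcons.
exact: unit_rcons.
Qed.

Lemma sm_dirDer {W : normedModType R} N vs (f : V -> W) :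
  sm (N + size vs) f -> sm N (dirDer vs f).
Proof.
by move=> s us Hus x Dx; rewrite -dirDer_cat; apply: s; rewrite // size_cat ltn_add2r.
Qed.

Lemma bd_dirDer N B vs (f : V -> R) :
  bd (N + size vs) B f -> unit_seq vs -> bd N B (dirDer vs f).
Proof.
move=> s uv us Hus uu x Dx; rewrite -dirDer_cat; apply: s => //.
  by rewrite size_cat leq_add2r.
by move=> u; rewrite mem_cat => /orP[/uu|/uv].
Qed.

Lemma cl_dirDer N B vs (f : V -> R) :
  cl (N + size vs) B f -> unit_seq vs -> cl N B (dirDer vs f).
Proof. by move=> [s b] uv; split; [apply: sm_dirDer|apply: bd_dirDer]. Qed.

Lemma sm_diff {W : normedModType R} N (f : V -> W) x : (0 < N)%N -> sm N f -> D x ->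
  differentiable f x.
Proof. by move=> N0 s Dx; apply: (s [::]). Qed.


Lemma derive_add {W : normedModType R} (f g : V -> W) x u :
  derivable f x u -> derivable g x u ->
  'D_u (fun y => f y + g y) x = 'D_u f x + 'D_u g x.
Proof. move=> df dg; exact: (deriveD df dg). Qed.

Lemma derive_scale {W : normedModType R} (f : V -> W) (c : R) x u :
  derivable f x u -> 'D_u (fun y => c *: f y) x = c *: 'D_u f x.
Proof. move=> df; exact: (deriveZ c df). Qed.

Lemma derive_mul (f g : V -> R) x u :
  derivable f x u -> derivable g x u ->
  'D_u (fun y => f y * g y) x = f x * 'D_u g x + g x * 'D_u f x.
Proof. move=> df dg; exact: (deriveM df dg). Qed.

Lemma dirDer_add {W : normedModType R} N (f g : V -> W) us :
  sm N f -> sm N g -> (size us <= N)%N ->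
  eqD (dirDer us (fun y => f y + g y)) (fun y => dirDer us f y + dirDer us g y).
Proof.
move=> sf sg; elim: us => [|u us IH] //= Hus x Dx.
rewrite (@derive_loc _ _ _ u (IH (ltnW Hus)) x Dx).
by apply: derive_add; apply: diff_derivable; [apply: sf|apply: sg].
Qed.

Lemma sm_add {W : normedModType R} N (f g : V -> W) :
  sm N f -> sm N g -> sm N (fun y => f y + g y).
Proof.
move=> sf sg us Hus x Dx.
apply: (@diff_loc _ (fun y => dirDer us f y + dirDer us g y)) => //.
  by move=> y Dy; symmetry; apply: (dirDer_add sf sg) => //; exact: ltnW.
exact: differentiableD (sf _ Hus _ Dx) (sg _ Hus _ Dx).
Qed.

Lemma cl_add N B B' (f g : V -> R) :
  cl N B f -> cl N B' g -> cl N (B + B') (fun y => f y + g y).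
Proof.
move=> [sf bf] [sg bg]; split; first exact: sm_add.
move=> us Hus uu x Dx; rewrite (dirDer_add sf sg Hus Dx).
by apply: le_trans (ler_normD _ _) _; apply: lerD; [apply: bf|apply: bg].
Qed.

Lemma dirDer_scale {W : normedModType R} N (f : V -> W) (c : R) us :
  sm N f -> (size us <= N)%N ->
  eqD (dirDer us (fun y => c *: f y)) (fun y => c *: dirDer us f y).
Proof.
move=> sf; elim: us => [|u us IH] //= Hus x Dx.
rewrite (@derive_loc _ _ _ u (IH (ltnW Hus)) x Dx).
by apply: derive_scale; apply: diff_derivable; apply: sf.
Qed.

Lemma sm_scale {W : normedModType R} N (f : V -> W) c :
  sm N f -> sm N (fun y => c *: f y).
Proof.
move=> sf us Hus x Dx.
apply: (@diff_loc _ (fun y => c *: dirDer us f y)) => //.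
  by move=> y Dy; symmetry; apply: (dirDer_scale c sf) => //; exact: ltnW.
exact: differentiableZ (sf _ Hus _ Dx).
Qed.

Lemma cl_scale N B (f : V -> R) c :
  cl N B f -> cl N (`|c| * B) (fun y => c * f y).
Proof.
move=> [sf bf]; split; first exact: (sm_scale c sf).
move=> us Hus uu x Dx; rewrite (dirDer_scale c sf Hus Dx) /= normrM.
by apply: ler_wpM2l => //; apply: bf.
Qed.

Lemma dirDer_zero {W : normedModType R} us :
  dirDer us (fun _ : V => (0 : W)) = (fun _ => 0).
Proof.
elim: us => //= u us ->; apply/funext => x; exact: (derive_cst (0 : W)).
Qed.

Lemma cl_zero N : cl N 0 (fun _ : V => (0 : R)).
Proof.
split.
  by move=> us _ x _; rewrite dirDer_zero; exact: differentiable_cst.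
by move=> us _ _ x _; rewrite dirDer_zero normr0.
Qed.

Lemma cl_sum N (I : Type) (r : seq I) (P : pred I) (F : I -> V -> R) (B : I -> R) :
  (forall i, P i -> cl N (B i) (F i)) ->
  cl N (\sum_(i <- r | P i) B i) (fun y => \sum_(i <- r | P i) F i y).
Proof.
elim: r => [|i r IH] H.
  rewrite big_nil; apply: (@cl_loc _ _ (fun _ => 0)); last exact: cl_zero.
  by move=> y _; rewrite big_nil.
rewrite big_cons; case Pi: (P i).
  apply: (@cl_loc _ _ (fun y => F i y + \sum_(j <- r | P j) F j y)).
    by move=> y _; rewrite big_cons Pi.
  by apply: cl_add; [apply: H|apply: IH].
apply: (@cl_loc _ _ (fun y => \sum_(j <- r | P j) F j y)).
  by move=> y _; rewrite big_cons Pi.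
exact: IH.
Qed.

Lemma sm_mul N (f g : V -> R) : sm N f -> sm N g -> sm N (fun y => f y * g y).
Proof.
elim: N f g => [|N IH] f g sf sg us //.
case/lastP: us => [|us u] Hus x Dx.
  exact: differentiableM (sf [::] isT x Dx) (sg [::] isT x Dx).
rewrite size_rcons ltnS in Hus; rewrite dirDer_rcons.
have E : eqD ('D_u (fun y => f y * g y)) (fun y => f y * 'D_u g y + g y * 'D_u f y).
  move=> y Dy; apply: derive_mul; apply: diff_derivable;
    [apply: (sf [::])|apply: (sg [::])] => //.
apply: (@diff_loc _ (dirDer us (fun y => f y * 'D_u g y + g y * 'D_u f y))) => //.
  by move=> y Dy; symmetry; apply: dirDer_loc.
have sf' : sm N f by apply: sm_le sf; apply: leqnSn.
have sg' : sm N g by apply: sm_le sg; apply: leqnSn.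
have S : sm N (fun y => f y * 'D_u g y + g y * 'D_u f y).
  by apply: sm_add; apply: IH => //; apply: sm_D.
exact: S.
Qed.

Lemma cl_mul N B B' (f g : V -> R) : 0 <= B -> 0 <= B' ->
  cl N B f -> cl N B' g -> cl N (2 ^+ N * B * B') (fun y => f y * g y).
Proof.
move=> B0 B'0 [sf bf] [sg bg]; split; first exact: sm_mul.
elim: N f g B B' B0 B'0 sf bf sg bg => [|N IH] f g B B' B0 B'0 sf bf sg bg us.
  case: us => // _ _ x Dx /=; rewrite expr0 mul1r normrM.
  by apply: ler_pM => //; [apply: (bf [::])|apply: (bg [::])].
case/lastP: us => [|us u] Hus uu x Dx.
  rewrite /= normrM -mulrA; apply: le_trans (_ : 1 * (B * B') <= _).
    by rewrite mul1r; apply: ler_pM => //; [apply: (bf [::])|apply: (bg [::])].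
  apply: ler_wpM2r; first exact: mulr_ge0.
  by apply: exprn_ege1; rewrite ler1n.
rewrite size_rcons ltnS in Hus; rewrite dirDer_rcons.
have uu' : unit_seq us by move=> v vin; apply: uu; rewrite mem_rcons in_cons vin orbT.
have Hu : enorm u <= 1 by apply: uu; rewrite mem_rcons mem_head.
have E : eqD ('D_u (fun y => f y * g y)) (fun y => f y * 'D_u g y + g y * 'D_u f y).
  move=> y Dy; apply: derive_mul; apply: diff_derivable;
    [apply: (sf [::])|apply: (sg [::])] => //.
rewrite (@dirDer_loc _ us _ _ E x Dx).
have sf' : sm N f by apply: sm_le sf; apply: leqnSn.
have sg' : sm N g by apply: sm_le sg; apply: leqnSn.
have bf' : bd N B f by apply: bd_le bf; apply: leqnSn.
have bg' : bd N B' g by apply: bd_le bg; apply: leqnSn.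
have S1 := IH f ('D_u g) B B' B0 B'0 sf' bf' (sm_D u sg) (bd_D bg Hu).
have S2 := IH g ('D_u f) B' B B'0 B0 sg' bg' (sm_D u sf) (bd_D bf Hu).
have sm1 : sm N (fun y => f y * 'D_u g y) by apply: sm_mul => //; apply: sm_D.
have sm2 : sm N (fun y => g y * 'D_u f y) by apply: sm_mul => //; apply: sm_D.
rewrite (dirDer_add sm1 sm2 Hus Dx).
apply: le_trans (ler_normD _ _) _.
apply: le_trans (lerD (S1 us Hus uu' x Dx) (S2 us Hus uu' x Dx)) _.
by rewrite exprS le_eqVlt; apply/orP; left; apply/eqP; ring.
Qed.

Lemma eq_le_ (a b : R) : a = b -> a <= b.
Proof. by move->. Qed.

Definition ev (q : 'I_d) : V := delta_mx ord0 q.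
Definition cmp (F : V -> V) (q : 'I_d) : V -> R := fun y => F y ord0 q.

Lemma derive_lin (h : V -> R) x u : differentiable h x ->
  'D_u h x = \sum_(q < d) u ord0 q * 'D_(ev q) h x.
Proof.
move=> dh; rewrite deriveE // {1}(row_sum_delta u) linear_sum.
by apply: eq_bigr => q _; rewrite linearZ /= -deriveE.
Qed.

Lemma derive_Zl (k : V -> R) (v : V) x u : differentiable k x ->
  'D_u (fun y => k y *: v) x = 'D_u k x *: v.
Proof.
move=> dk; rewrite deriveE; last exact: differentiableZl.
by rewrite diffZl // -deriveE.
Qed.

Lemma derive_row (G : 'I_d -> V -> R) x u :
  (forall q, differentiable (G q) x) ->
  'D_u (fun y => \row_q G q y) x = \row_q 'D_u (G q) x.
Proof.
move=> dG.
have E : (fun y => \row_q G q y) = \sum_(q < d) (fun y => G q y *: ev q).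
  rewrite fct_sumE; apply/funext => y; rewrite [LHS]row_sum_delta.
  by apply: eq_bigr => q _; rewrite mxE.
rewrite E derive_sum; last by move=> q; apply: diff_derivable; apply: differentiableZl.
rewrite [RHS]row_sum_delta; apply: eq_bigr => q _.
by rewrite derive_Zl // mxE.
Qed.

Lemma dirDer_comp N (F : V -> V) us :
  (forall q, sm N (cmp F q)) -> (size us <= N)%N ->
  forall q, eqD (cmp (dirDer us F) q) (dirDer us (cmp F q)).
Proof.
move=> sF; elim: us => [|u us IH] //= Hus q x Dx.
rewrite /cmp /=.
have E : eqD (dirDer us F) (fun y => \row_q' dirDer us (cmp F q') y).
  move=> y Dy; apply/rowP => j; rewrite mxE -(IH (ltnW Hus) j y Dy).
  by [].
rewrite (derive_loc u E Dx) derive_row ?mxE //.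
by move=> q'; apply: sF.
Qed.

Lemma enorm_e q : enorm (ev q) = 1.
Proof.
rewrite /enorm (bigD1 q) //= big1 ?addr0.
  by rewrite /ev mxE !eqxx expr1n sqrtr1.
by move=> i iq; rewrite /ev mxE eqxx (negbTE iq) expr0n.
Qed.

Lemma enorm_le (v : V) : enorm v <= \sum_(q < d) `|v ord0 q|.
Proof.
rewrite /enorm.
have H : \sum_(q < d) v ord0 q ^+ 2 <= (\sum_(q < d) `|v ord0 q|) ^+ 2 /\
         0 <= \sum_(q < d) `|v ord0 q|.
  elim/big_ind2 : _ => [|a1 b1 a2 b2 [h1 p1] [h2 p2]|q _].
  - by rewrite expr0n.
  - split; last exact: addr_ge0.
    apply: le_trans (lerD h1 h2) _; nra.
  - by rewrite real_normK ?num_real.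
case: H => H1 H2.
by rewrite -(ger0_norm H2) -sqrtr_sqr ler_sqrt // sqr_ge0.
Qed.

Fixpoint xpand (us : seq V) (F : seq V -> R) : R :=
  if us is u :: us' then \sum_(q < d) u ord0 q * xpand us' (fun es => F (ev q :: es))
  else F [::].

Lemma sm_sum {W : normedModType R} N (I : Type) (r : seq I) (P : pred I) (F : I -> V -> W) :
  (forall i, P i -> sm N (F i)) -> sm N (fun y => \sum_(i <- r | P i) F i y).
Proof.
elim: r => [|i r IH] H.
  apply: (@sm_loc _ _ (fun _ => 0)).
    by move=> y _; rewrite big_nil.
  by move=> us _ x _; rewrite dirDer_zero; exact: differentiable_cst.
case Pi: (P i).
  apply: (@sm_loc _ _ (fun y => F i y + \sum_(j <- r | P j) F j y)).
    by move=> y _; rewrite big_cons Pi.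
  by apply: sm_add; [apply: H|apply: IH].
apply: (@sm_loc _ _ (fun y => \sum_(j <- r | P j) F j y)).
  by move=> y _; rewrite big_cons Pi.
exact: IH.
Qed.

Lemma dirDer_sum {W : normedModType R} N (I : Type) (r : seq I) (P : pred I) (F : I -> V -> W) us :
  (forall i, P i -> sm N (F i)) -> (size us <= N)%N ->
  eqD (dirDer us (fun y => \sum_(i <- r | P i) F i y))
      (fun y => \sum_(i <- r | P i) dirDer us (F i) y).
Proof.
elim: r => [|i r IH] H Hus y Dy.
  have -> : (fun y => \sum_(i <- [::] | P i) F i y) = (fun _ => 0).
    by apply/funext => z; rewrite big_nil.
  by rewrite dirDer_zero big_nil.
have smr : sm N (fun y => \sum_(j <- r | P j) F j y) by apply: sm_sum.
case Pi: (P i).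
  rewrite (@dirDer_loc _ us _ (fun y => F i y + \sum_(j <- r | P j) F j y)) //; last first.
    by move=> z _; rewrite big_cons Pi.
  by rewrite (dirDer_add (H i Pi) smr Hus Dy) big_cons Pi IH.
rewrite (@dirDer_loc _ us _ (fun y => \sum_(j <- r | P j) F j y)) //; last first.
  by move=> z _; rewrite big_cons Pi.
by rewrite big_cons Pi IH.
Qed.


Lemma slot_lin pre u us (g : V -> R) x :
  sm (size pre + (size us).+1) g -> D x ->
  dirDer (pre ++ u :: us) g x = \sum_(q < d) u ord0 q * dirDer (pre ++ ev q :: us) g x.
Proof.
move=> sg Dx.
rewrite dirDer_cat /=.
set h := dirDer us g.
have sh : sm (size pre).+1 h.
  apply: sm_dirDer; apply: sm_le sg; by rewrite addSnnS.
have E : eqD ('D_u h) (fun y => \sum_(q < d) u ord0 q * 'D_(ev q) h y).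
  move=> y Dy; apply: derive_lin; exact: (sh [::]).
rewrite (dirDer_loc pre E Dx).
have sF : forall q, true -> sm (size pre) (fun y => u ord0 q * 'D_(ev q) h y).
  by move=> q _; apply: (sm_scale (u ord0 q)); apply: sm_D.
rewrite (@dirDer_sum _ _ _ _ _ _ _ sF (leqnn _) x Dx).
apply: eq_bigr => q _.
by rewrite (dirDer_scale (u ord0 q) (sm_D (ev q) sh) (leqnn _) Dx) dirDer_cat.
Qed.

Lemma expandP pre us (g : V -> R) x :
  sm (size pre + size us) g -> D x ->
  dirDer (pre ++ us) g x = xpand us (fun es => dirDer (pre ++ es) g x).
Proof.
elim: us pre => [|u us IH] pre sg Dx //=.
rewrite slot_lin //; apply: eq_bigr => q _; congr (_ * _).
rewrite -cat_rcons IH //; last by rewrite size_rcons addSnnS.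
by congr xpand; apply/funext => es; rewrite cat_rcons.
Qed.

Lemma cl_expand N (ps : seq ((V -> V) * R)) (G : seq V -> V -> R) BG :
  (forall p, p \in ps -> 0 <= p.2 /\ forall q, cl N p.2 (cmp p.1 q)) -> 0 <= BG ->
  (forall es, size es = size ps -> unit_seq es -> cl N BG (G es)) ->
  cl N ((d%:R * 2 ^+ N) ^+ (size ps) * (\prod_(p <- ps) p.2) * BG)
     (fun y => xpand (map (fun p => p.1 y) ps) (fun es => G es y)).
Proof.
elim: ps G => [|p ps IH] G Hps BG0 HG.
  rewrite expr0 big_nil !mul1r /=; apply: HG => //.
have [p0 Hp] := Hps p (mem_head _ _).
have Hps' : forall p', p' \in ps -> 0 <= p'.2 /\ forall q, cl N p'.2 (cmp p'.1 q).
  by move=> p' pin; apply: Hps; rewrite in_cons pin orbT.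
set Bi := (d%:R * 2 ^+ N) ^+ (size ps) * (\prod_(p <- ps) p.2) * BG.
have Bi0 : 0 <= Bi.
  rewrite /Bi mulr_ge0 // mulr_ge0 //.
  by rewrite big_seq_cond; apply: prodr_ge0 => i /andP[/Hps' []].
have Hq : forall q, true -> cl N (2 ^+ N * p.2 * Bi)
    (fun y => cmp p.1 q y * xpand (map (fun p => p.1 y) ps) (fun es => G (ev q :: es) y)).
  move=> q _; apply: cl_mul => //; apply: IH => // es Hes ues; apply: HG.
    by rewrite /= Hes.
  by move=> u; rewrite in_cons => /orP[/eqP->|/ues]; rewrite ?enorm_e.
apply: (cl_le (leqnn _) _ (@cl_sum N 'I_d (index_enum 'I_d) xpredT _ _ Hq)).
apply: eq_le_.
rewrite sumr_const card_ord /= big_cons /Bi -mulr_natl exprS; ring.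
Qed.



Lemma prod_Kset i l (kk : {ffun 'I_l.+1 -> 'I_i.+1}) (b s : R) :
  Kset kk -> \prod_(t < l.+1) (b * s ^+ t.+1) ^+ kk t = b ^+ i * s ^+ (i + l).
Proof.
case/andP => /eqP Hi /eqP Hl.
rewrite (eq_bigr (fun t : 'I_l.+1 => b ^+ kk t * s ^+ (t.+1 * kk t)%N)); last first.
  by move=> t _; rewrite exprMn exprM.
rewrite big_split /= !prodrXr Hi; congr (_ * _); congr (_ ^+ _).
rewrite (eq_bigr (fun t : 'I_l.+1 => (kk t + t * kk t)%N)); last by move=> t _; rewrite mulSn.
by rewrite big_split /= Hi Hl.
Qed.

Lemma cl_term N' i l (kk : {ffun 'I_l.+1 -> 'I_i.+1}) (f : nat -> V -> V)
    (b s BG : R) (G : seq V -> V -> R) :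
  Kset kk -> 0 <= b -> 0 <= s -> 0 <= BG ->
  (forall t : 'I_l.+1, (0 < kk t)%N -> forall q, cl N' (b * s ^+ t.+1) (cmp (f t.+1) q)) ->
  (forall es, size es = i -> unit_seq es -> cl N' BG (G es)) ->
  cl N' (`|kcoef R kk| * ((d%:R * 2 ^+ N') ^+ i * (b ^+ i * s ^+ (i + l)) * BG))
    (fun y => kcoef R kk * xpand (dirs kk (fun j => f j y)) (fun es => G es y)).
Proof.
move=> Kk b0 s0 BG0 Hf HG.
set ps := flatten [seq nseq (kk t) (f (nat_of_ord t).+1, b * s ^+ (nat_of_ord t).+1) | t <- enum 'I_l.+1].
have Hsize : size ps = i.
  rewrite size_flat_nseq big_enum /=; by case/andP: Kk => /eqP.
have Hprod : \prod_(p <- ps) p.2 = b ^+ i * s ^+ (i + l).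
  by rewrite prod_flat_nseq big_enum /= prod_Kset.
have Hmap : forall y, map (fun p => p.1 y) ps = dirs kk (fun j => f j y).
  by move=> y; rewrite map_flat_nseq.
apply: cl_scale.
have E : (fun y => xpand (dirs kk (fun j => f j y)) (fun es => G es y)) =
         (fun y => xpand (map (fun p => p.1 y) ps) (fun es => G es y)).
  by apply/funext => y; rewrite Hmap.
rewrite E -Hprod -{1}Hsize; apply: cl_expand => //; last by rewrite Hsize.
move=> p /mem_flat_nseq [t [kt ->]] /=; split.
  by rewrite mulr_ge0 // exprn_ge0.
exact: Hf.
Qed.

End Calc.


Section Series.
Variables (R : realType) (beta : R).
Hypothesis b0 : 0 <= beta.
Hypothesis b1 : beta < 1.

Definition Wsum p n := \sum_(k < n) ('C(k + p, p))%:R * beta ^+ k.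

Lemma Wsum0 n : (1 - beta) * Wsum 0 n = 1 - beta ^+ n.
Proof.
rewrite /Wsum; elim: n => [|n IH]; first by rewrite big_ord0 expr0 mulr0 subrr.
rewrite big_ord_recr /= mulrDr IH addn0 bin0 exprS; ring.
Qed.

Lemma WsumS p n : (1 - beta) * Wsum p.+1 n = Wsum p n - ('C(n + p, p.+1))%:R * beta ^+ n.
Proof.
rewrite /Wsum; elim: n => [|n IH].
  by rewrite !big_ord0 mulr0 add0n bin_small // mul0r subrr.
rewrite !big_ord_recr /= mulrDr IH addSn binS natrD addnS binS natrD exprS; ring.
Qed.

Lemma Wsum_bound p n : Wsum p n <= (1 - beta) ^- p.+1.
Proof.
have hb : 0 < 1 - beta by rewrite subr_gt0.
elim: p n => [|p IH] n.
  rewrite expr1 -(ler_pM2l hb) Wsum0 mulfV ?gt_eqF //.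
  by rewrite lerBlDr lerDl exprn_ge0.
rewrite -(ler_pM2l hb) WsumS exprS invfM mulrA mulfV ?gt_eqF // mul1r.
apply: le_trans (IH n); rewrite lerBlDr lerDl mulr_ge0 // exprn_ge0 //.
Qed.

Lemma pow_le_ffact k p : (k ^ p <= (k + p) ^_ p)%N.
Proof.
elim: p => [|p IH]; first by rewrite ffactn0.
rewrite addnS ffactSS expnS leq_mul //; first by rewrite -addnS leq_addr.
Qed.

Lemma series_bound p : exists S : R, 0 <= S /\
  forall n, \sum_(k < n) beta ^+ k * (k%:R) ^+ p <= S.
Proof.
exists ((p`!)%:R * (1 - beta) ^- p.+1); split.
  by rewrite mulr_ge0 // invr_ge0 exprn_ge0 // subr_ge0 ltW.
move=> n; apply: le_trans (_ : (p`!)%:R * Wsum p n <= _); last first.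
  by rewrite ler_wpM2l // Wsum_bound.
rewrite /Wsum mulr_sumr; apply: ler_sum => k _.
rewrite mulrA [_ * beta ^+ k]mulrC.
apply: ler_wpM2l; first exact: exprn_ge0.
rewrite -natrX -natrM ler_nat mulnC bin_ffact.
exact: pow_le_ffact.
Qed.

End Series.


Section Stage.
Variables (R : realType) (d : nat) (beta : R) (L : nat -> 'rV[R]_d -> R).

Lemma stageS m : stage beta L m.+1 =
  (fun j => if j == m.+1 then (if m == 0%N then c1 beta L else cnext beta L m.+1 (stage beta L m).2)
            else (stage beta L m).1 j,
   fun j => if j == m.+1 then
     pnext m.+1 (fun j => if j == m.+1 then (if m == 0%N then c1 beta L else cnext beta L m.+1 (stage beta L m).2)
            else (stage beta L m).1 j) (stage beta L m).2
     else (stage beta L m).2 j).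
Proof. by rewrite /=; case: (stage beta L m). Qed.

Lemma stage_le m j : (j <= m)%N ->
  (stage beta L m).1 j = cmem beta L j /\ (stage beta L m).2 j = phist beta L j.
Proof.
elim: m => [|m IH]; first by rewrite leqn0 => /eqP->.
case: (eqVneq j m.+1) => [->|jm] Hj; first by [].
rewrite stageS /= (negbTE jm); apply: IH.
by rewrite -ltnS ltn_neqAle jm.
Qed.

Lemma cmem1 : cmem beta L 1 = c1 beta L.
Proof. by rewrite /cmem stageS /=. Qed.

Lemma cmemS m : (0 < m)%N -> cmem beta L m.+1 = cnext beta L m.+1 (stage beta L m).2.
Proof. by case: m => // m _; rewrite /cmem stageS /= eqxx. Qed.

Lemma phistS m : phist beta L m.+1 =
  pnext m.+1 (fun j => if j == m.+1 then cmem beta L m.+1 else (stage beta L m).1 j)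
    (stage beta L m).2.
Proof. by rewrite /phist /cmem !stageS /= !eqxx. Qed.

End Stage.

Section Main.
Variables (R : realType) (beta : R) (K d : nat) (M : R).
Hypothesis hb0 : 0 < beta.
Hypothesis hb1 : beta < 1.
Hypothesis K2 : (2 <= K)%N.
Local Notation V := 'rV[R]_d.
Local Notation N := (2 * K)%N.
Definition Mp := Num.max M 0.

Lemma Mp0 : 0 <= Mp. Proof. by rewrite /Mp le_max lexx orbT. Qed.

Definition hypL (D : set V) (L : nat -> V -> R) :=
  [/\ open D, (forall s, CkOn N D (L s)) &
   (forall (s k : nat), (1 <= k <= N)%N -> forall theta, D theta ->
     forall us : seq V, size us = k -> (forall u, u \in us -> enorm u <= 1) ->
       `|dirDer us (L s) theta| <= M)].

Lemma cl_L D L : hypL D L -> forall s us Nn, unit_seq us -> (0 < size us)%N ->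
  (Nn + size us <= N)%N -> cl D Nn Mp (dirDer us (L s)).
Proof.
case=> oD Ck Hb s us Nn uu s0 Hs; split.
  move=> vs Hvs x Dx; rewrite -dirDer_cat; apply: (Ck s).1 => //.
  rewrite size_cat; apply: leq_trans Hs; by rewrite ltn_add2r.
move=> vs Hvs uv x Dx; rewrite -dirDer_cat.
apply: le_trans (_ : M <= Mp); last by rewrite /Mp le_max lexx.
apply: (Hb s (size (vs ++ us))) => //.
  rewrite size_cat; apply/andP; split; first by rewrite (leq_trans s0) // leq_addl.
  by apply: leq_trans Hs; rewrite leq_add2r.
by move=> u; rewrite mem_cat => /orP[/uv|/uu].
Qed.

Lemma c1_step D L (H : hypL D L) S0 :
  (forall n, \sum_(k < n) beta ^+ k * (k%:R) ^+ 0 <= S0) ->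
  forall n q, cl D (N - 1) (Mp * S0) (cmp (cmem beta L 1 n) q).
Proof.
move=> HS n q; case: (H) => oD _ _.
have E : eqD D (fun y => -1 * \sum_(k < n.+1) beta ^+ k * dirDer [:: ev q] (L (n - k)%N) y)
  (cmp (cmem beta L 1 n) q).
  move=> y _; rewrite cmem1 /cmp /c1 mulN1r !mxE summxE; congr (- _).
  by apply: eq_bigr => k _; rewrite !mxE.
apply: (cl_loc oD E).
have Hk : forall k : 'I_n.+1, true -> cl D (N - 1) (`|beta ^+ k| * Mp)
    (fun y => beta ^+ k * dirDer [:: ev q] (L (n - k)%N) y).
  move=> k _; apply: (cl_scale oD); apply: (cl_L H) => //.
    by move=> u; rewrite mem_seq1 => /eqP->; rewrite enorm_e.
  by rewrite /= addn1 subn1 prednK // muln_gt0 (leq_trans _ K2).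
apply: cl_le (leqnn _) _ (cl_scale oD (-1) (cl_sum oD _ Hk)).
rewrite normrN normr1 mul1r -mulr_suml mulrC; apply: ler_wpM2l; first exact: Mp0.
apply: le_trans (HS n.+1); apply: ler_sum => k _.
by rewrite expr0 mulr1 ger0_norm // exprn_ge0 // ltW.
Qed.


Lemma expr_mono (a b : R) n : 0 <= a -> a <= b -> a ^+ n <= b ^+ n.
Proof.
move=> a0 ab; elim: n => [|n IH]; rewrite ?expr0 // !exprS.
by apply: ler_pM => //; apply: exprn_ge0.
Qed.

Lemma term_bound i l m' Nn (kk : {ffun 'I_l.+1 -> 'I_i.+1}) (b s BG : R) :
  0 <= b -> 1 <= s -> 0 <= BG -> (i <= m')%N -> (i + l <= m'.-1)%N ->
  `|kcoef R kk| * ((d%:R * 2 ^+ Nn) ^+ i * (b ^+ i * s ^+ (i + l)) * BG)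
   <= ((d%:R * 2 ^+ Nn * b + 1) ^+ m' * (BG + 1)) * s ^+ m'.-1.
Proof.
move=> b0 s1 BG0 im ilm.
have s0 : 0 <= s by apply: le_trans s1.
have kc : `|kcoef R kk| <= 1.
  rewrite /kcoef normfV ger0_norm // invf_le1 ?ler1n ?ltr0n //;
    by rewrite prodn_gt0 // => j; exact: fact_gt0.
set x := d%:R * 2 ^+ Nn.
have x0 : 0 <= x by rewrite mulr_ge0 // exprn_ge0.
have xb0 : 0 <= x * b by rewrite mulr_ge0.
apply: le_trans (_ : 1 * (((x * b) ^+ i * s ^+ (i + l)) * BG) <= _).
  have -> : x ^+ i * (b ^+ i * s ^+ (i + l)) * BG = (x * b) ^+ i * s ^+ (i + l) * BG.
    by rewrite [in RHS]exprMn !mulrA.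
  apply: ler_wpM2r => //.
  by rewrite mulr_ge0 // mulr_ge0 // ?exprn_ge0.
rewrite mul1r [X in _ <= X]mulrAC; apply: ler_pM.
- by rewrite mulr_ge0 // exprn_ge0.
- exact: BG0.
- apply: ler_pM; rewrite ?exprn_ge0 //.
    apply: le_trans (_ : (x * b + 1) ^+ i <= _).
      by apply: expr_mono => //; rewrite lerDl.
    by apply: ler_weXn2l => //; rewrite lerDr.
  exact: ler_weXn2l.
- by rewrite lerDl.
Qed.

Lemma size_dirs i l (kk : {ffun 'I_l.+1 -> 'I_i.+1}) (P : nat -> V) :
  Kset kk -> size (dirs kk P) = i.
Proof. by move=> /andP[/eqP Hi _]; rewrite /dirs size_flat_nseq big_enum. Qed.

Lemma Kset_pos i l (kk : {ffun 'I_l.+1 -> 'I_i.+1}) (t : 'I_l.+1) :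
  Kset kk -> (0 < kk t)%N -> (0 < i)%N.
Proof.
move=> /andP[/eqP Hi _] kt; rewrite -Hi (bigD1 t) //=.
exact: leq_trans kt (leq_addr _ _).
Qed.

Definition Zt m' (B1 BG : R) : R := (d%:R * 2 ^+ (N - m') * B1 + 1) ^+ m' * (BG + 1).
Definition Yc m (B1 : R) : R :=
  \sum_(i < m.+1) \sum_(kk : {ffun 'I_(m - i).+1 -> 'I_i.+1} | Kset kk) Zt m.+1 B1 Mp.

Lemma Yc_ge0 m B1 : 0 <= B1 -> 0 <= Yc m B1.
Proof.
move=> B0; apply: sumr_ge0 => i _; apply: sumr_ge0 => kk _.
rewrite /Zt mulr_ge0 // ?exprn_ge0 //; last by rewrite addr_ge0 // Mp0.
by rewrite addr_ge0 // mulr_ge0 // mulr_ge0 // exprn_ge0.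
Qed.

Lemma sum_shift1 (F : nat -> R) n : F 0%N >= 0 ->
  \sum_(k < n) F k.+1 <= \sum_(k < n.+1) F k.
Proof.
move=> F0; rewrite -(big_mkord xpredT (fun k => F k.+1)) -(big_mkord xpredT F) big_nat_recl //=.
by apply: ler_wpDl.
Qed.

Lemma c_step D L (H : hypL D L) m (B1 S : R) :
  (0 < m)%N -> (m.+1 <= K)%N -> 0 <= B1 -> 0 <= S ->
  (forall j, (0 < j <= m)%N -> forall n a, (0 < a <= n)%N -> forall q,
      cl D (N - j) (B1 * a%:R ^+ j) (cmp (phist beta L j n a) q)) ->
  (forall n, \sum_(k < n) beta ^+ k * (k%:R) ^+ m <= S) ->
  forall n q, cl D (N - m.+1) (Yc m B1 * S) (cmp (cmem beta L m.+1 n) q).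
Proof.
move=> m0 mK B0 S0 HP HS n q; case: (H) => oD Ck _.
set P := (stage beta L m).2.
pose T (k : nat) (i : 'I_m.+1) (kk : {ffun 'I_(m - i).+1 -> 'I_i.+1}) : V -> R :=
  fun y => kcoef R kk * xpand (dirs kk (fun j => P j n k y))
                                (fun es => dirDer (ev q :: es) (L (n - k)%N) y).
have E : eqD D (fun y => -1 * \sum_(k < n) beta ^+ k.+1 *
     \sum_(i < m.+1) \sum_(kk : {ffun 'I_(m - i).+1 -> 'I_i.+1} | Kset kk) T k.+1 i kk y)
  (cmp (cmem beta L m.+1 n) q).
  move=> y Dy; rewrite cmemS // /cmp /cnext mulN1r !mxE summxE; congr (- _).
  rewrite big_add1 /= big_mkord.
  apply: eq_bigr => k _; rewrite !mxE summxE; congr (_ * _).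
  apply: eq_bigr => i _; rewrite summxE; apply: eq_bigr => kk Kk.
  rewrite !mxE /T; congr (_ * _).
  have := @expandP _ _ D oD [:: ev q] (dirs kk (fun j => P j n k.+1 y)) (L (n - k.+1)%N) y.
  move=> /= -> //.
  move=> us Hus x Dx; apply: (Ck _).1 => //; apply: leq_trans Hus _.
  rewrite size_dirs //= add1n; have := ltn_ord i; lia.
apply: (cl_loc oD E).
have Hterm : forall (k : 'I_n) (i : 'I_m.+1) (kk : {ffun 'I_(m - i).+1 -> 'I_i.+1}),
    Kset kk -> cl D (N - m.+1) (Zt m.+1 B1 Mp * (k.+1%:R) ^+ m) (T k.+1 i kk).
  move=> k i kk Kk.
  have k1 : (0 < k.+1 <= n)%N by rewrite /= ltn_ord.
  have im : (i <= m)%N by rewrite -ltnS ltn_ord.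
  apply: cl_le (leqnn _) _ (cl_term oD (f := fun j => P j n k.+1) (b := B1) (s := k.+1%:R)
     (BG := Mp) (G := fun es => dirDer (ev q :: es) (L (n - k.+1)%N)) Kk B0 _ Mp0 _ _).
  - rewrite /Zt; apply: (term_bound (m' := m.+1) _ kk B0 _ Mp0).
    + by rewrite ler1n.
    + exact: ltnW.
    + by rewrite /= subnKC.
  - by rewrite ler0n.
  - move=> t kt q'.
    have ipos := Kset_pos Kk kt.
    have tm : (t.+1 <= m)%N by have := ltn_ord t; lia.
    rewrite /P (stage_le beta L tm).2.
    apply: cl_le _ (lexx _) (HP t.+1 _ n k.+1 k1 q'); first lia.
    by rewrite /= tm.
  - move=> es Hes ues; apply: (cl_L H) => //.
    + by move=> u; rewrite in_cons => /orP[/eqP->|/ues]; rewrite ?enorm_e.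
    + by rewrite /= Hes; lia.
have H3 := fun (k : 'I_n) (i : 'I_m.+1) (_ : true) => cl_sum oD (index_enum _) (fun kk Kk => Hterm k i kk Kk).
have H2 := fun (k : 'I_n) (_ : true) => cl_scale oD (beta ^+ k.+1) (cl_sum oD (index_enum _) (H3 k)).
have H1 := cl_scale oD (-1) (cl_sum oD (index_enum _) H2).
apply: cl_le (leqnn _) _ H1.
rewrite normrN normr1 mul1r.
rewrite (eq_bigr (fun k : 'I_n => Yc m B1 * (beta ^+ k.+1 * k.+1%:R ^+ m))); last first.
  move=> k _.
  have -> : \sum_(i < m.+1) \sum_(kk : {ffun 'I_(m - i).+1 -> 'I_i.+1} | Kset kk)
      Zt m.+1 B1 Mp * k.+1%:R ^+ m = Yc m B1 * k.+1%:R ^+ m.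
    by rewrite /Yc mulr_suml; apply: eq_bigr => i _; rewrite mulr_suml.
  by rewrite ger0_norm ?exprn_ge0 ?ltW // mulrCA.
rewrite -mulr_sumr ler_wpM2l ?Yc_ge0 //.
apply: le_trans (@sum_shift1 (fun k => beta ^+ k * k%:R ^+ m) n _) (HS n.+1).
by rewrite mulr_ge0 // exprn_ge0.
Qed.

Definition Yp m (B1 : R) : R :=
  \sum_(j < m.+1) \sum_(i < (m.+1 - j.+1).+1)
     \sum_(kk : {ffun 'I_(m.+1 - j.+1 - i).+1 -> 'I_i.+1} | Kset kk) Zt m.+1 B1 B1.

Lemma Yp_ge0 m B1 : 0 <= B1 -> 0 <= Yp m B1.
Proof.
move=> B0; apply: sumr_ge0 => j _; apply: sumr_ge0 => i _; apply: sumr_ge0 => kk _.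
rewrite /Zt mulr_ge0 // ?exprn_ge0 //; last by rewrite addr_ge0.
by rewrite addr_ge0 // mulr_ge0 // mulr_ge0 // exprn_ge0.
Qed.

Lemma Cj (L : nat -> V -> R) m j : (j <= m.+1)%N ->
  (if j == m.+1 then cmem beta L m.+1 else (stage beta L m).1 j) = cmem beta L j.
Proof.
case: eqP => [->//|/eqP jm] jle.
by rewrite (stage_le beta L (_ : j <= m)%N).1 // -ltnS ltn_neqAle jm.
Qed.

Lemma p_step D L (H : hypL D L) m (B1 : R) :
  (m.+1 <= K)%N -> 0 <= B1 ->
  (forall j, (0 < j <= m.+1)%N -> forall n q, cl D (N - j) B1 (cmp (cmem beta L j n) q)) ->
  (forall j, (0 < j <= m)%N -> forall n a, (0 < a <= n)%N -> forall q,
      cl D (N - j) (B1 * a%:R ^+ j) (cmp (phist beta L j n a) q)) ->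
  forall n a, (0 < a <= n)%N -> forall q,
    cl D (N - m.+1) (Yp m B1 * a%:R ^+ m.+1) (cmp (phist beta L m.+1 n a) q).
Proof.
move=> mK B0 HC HP n a an q; case: (H) => oD Ck _.
set P := (stage beta L m).2.
pose T (s : nat) (j : 'I_m.+1) (i : 'I_(m.+1 - j.+1).+1)
    (kk : {ffun 'I_(m.+1 - j.+1 - i).+1 -> 'I_i.+1}) : V -> R :=
  fun y => kcoef R kk * xpand (dirs kk (fun t => P t n s y))
                               (fun es => dirDer es (cmp (cmem beta L j.+1 (n - s)%N) q) y).
have E : eqD D (fun y => -1 * \sum_(s < a) \sum_(j < m.+1) \sum_(i < (m.+1 - j.+1).+1)
     \sum_(kk : {ffun 'I_(m.+1 - j.+1 - i).+1 -> 'I_i.+1} | Kset kk) T s.+1 j i kk y)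
  (cmp (phist beta L m.+1 n a) q).
  move=> y Dy; rewrite phistS /cmp /pnext mulN1r !mxE summxE; congr (- _).
  rewrite big_add1 /= big_mkord; apply: eq_bigr => s _; rewrite summxE.
  rewrite big_add1 /= big_mkord; apply: eq_bigr => j _; rewrite summxE.
  apply: eq_bigr => i _; rewrite summxE; apply: eq_bigr => kk Kk.
  rewrite !mxE /T; congr (_ * _).
  have jm : (j.+1 <= m.+1)%N by rewrite ltnS -ltnS ltn_ord.
  rewrite Cj //.
  have jj : (0 < j.+1 <= m.+1)%N by apply/andP; split.
  have im : (i <= m.+1 - j.+1)%N by rewrite -ltnS ltn_ord.
  have sF : forall q', sm D (size (dirs kk (fun t => P t n s.+1 y)))
      (cmp (cmem beta L j.+1 (n - s.+1)%N) q').
    move=> q'; have [sm1 _] := HC j.+1 jj (n - s.+1)%N q'.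
    apply: sm_le sm1; rewrite size_dirs //; lia.
  have := @dirDer_comp _ _ D oD _ (cmem beta L j.+1 (n - s.+1)%N) _ sF (leqnn _) q y Dy.
  rewrite /cmp => ->.
  have := @expandP _ _ D oD [::] (dirs kk (fun t => P t n s.+1 y))
     (cmp (cmem beta L j.+1 (n - s.+1)%N) q) y.
  by move=> /= -> //; apply: sF.
apply: (cl_loc oD E).
have Hterm : forall (s : 'I_a) (j : 'I_m.+1) (i : 'I_(m.+1 - j.+1).+1)
    (kk : {ffun 'I_(m.+1 - j.+1 - i).+1 -> 'I_i.+1}),
    Kset kk -> cl D (N - m.+1) (Zt m.+1 B1 B1 * (s.+1%:R) ^+ m) (T s.+1 j i kk).
  move=> s j i kk Kk.
  have s1 : (0 < s.+1 <= n)%N by rewrite /=; apply: leq_trans (ltn_ord s) _; case/andP: an.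
  have jm : (j.+1 <= m.+1)%N by rewrite ltnS -ltnS ltn_ord.
  have jj : (0 < j.+1 <= m.+1)%N by apply/andP; split.
  have im : (i <= m.+1 - j.+1)%N by rewrite -ltnS ltn_ord.
  apply: cl_le (leqnn _) _ (cl_term oD (f := fun t => P t n s.+1) (b := B1) (s := s.+1%:R)
     (BG := B1) (G := fun es => dirDer es (cmp (cmem beta L j.+1 (n - s.+1)%N) q)) Kk B0 _ B0 _ _).
  - rewrite /Zt; apply: (term_bound (m' := m.+1) _ kk B0 _ B0).
    + by rewrite ler1n.
    + by apply: leq_trans im _; apply: leq_subr.
    + by rewrite /= subnKC //; apply: leq_subr.
  - by rewrite ler0n.
  - move=> t kt q'.
    have ipos := Kset_pos Kk kt.
    have tm : (t.+1 <= m)%N by have := ltn_ord t; lia.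
    rewrite /P (stage_le beta L tm).2.
    apply: cl_le _ (lexx _) (HP t.+1 _ n s.+1 s1 q'); first lia.
    by rewrite /= tm.
  - move=> es Hes ues; apply: cl_dirDer => //.
    have [sm1 bd1] := HC j.+1 jj (n - s.+1)%N q.
    apply: cl_le _ (lexx _) (conj sm1 bd1); rewrite Hes; lia.
have H3 := fun (s : 'I_a) (j : 'I_m.+1) (i : 'I_(m.+1 - j.+1).+1) (_ : true) =>
  cl_sum oD (index_enum _) (fun kk Kk => Hterm s j i kk Kk).
have H2 := fun (s : 'I_a) (j : 'I_m.+1) (_ : true) => cl_sum oD (index_enum _) (H3 s j).
have H2' := fun (s : 'I_a) (_ : true) => cl_sum oD (index_enum _) (H2 s).
have H1 := cl_scale oD (-1) (cl_sum oD (index_enum _) H2').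
apply: cl_le (leqnn _) _ H1.
rewrite normrN normr1 mul1r.
rewrite (eq_bigr (fun s : 'I_a => Yp m B1 * s.+1%:R ^+ m)); last first.
  move=> s _; rewrite /Yp mulr_suml; apply: eq_bigr => j _.
  rewrite mulr_suml; apply: eq_bigr => i _; by rewrite mulr_suml.
rewrite -mulr_sumr ler_wpM2l ?Yp_ge0 //.
apply: le_trans (_ : \sum_(s < a) a%:R ^+ m <= _).
  apply: ler_sum => s _; apply: expr_mono => //; rewrite ler_nat.
  exact: ltn_ord.
by rewrite sumr_const card_ord exprS -[_ *+ a]mulr_natl.
Qed.

Lemma main_ind m : (m <= K)%N -> exists B : R, 0 <= B /\ forall D L, hypL D L ->
  forall j, (0 < j <= m)%N ->
   (forall n q, cl D (N - j) B (cmp (cmem beta L j n) q)) /\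
   (forall n a, (0 < a <= n)%N -> forall q,
      cl D (N - j) (B * a%:R ^+ j) (cmp (phist beta L j n a) q)).
Proof.
elim: m => [|m IH] mK.
  by exists 0; split => // D L _ j; case: j.
have [B0 [B00 HB]] := IH (ltnW mK).
have [Bc [Bc0 HBc]] : exists Bc : R, 0 <= Bc /\ forall D L, hypL D L ->
    forall n q, cl D (N - m.+1) Bc (cmp (cmem beta L m.+1 n) q).
  case: (posnP m) => [->|m0].
    have [S0 [S00 HS]] := series_bound (ltW hb0) hb1 0.
    exists (Mp * S0); split; first by rewrite mulr_ge0 // Mp0.
    by move=> D L H; apply: c1_step.
  have [S [S0 HS]] := series_bound (ltW hb0) hb1 m.
  exists (Yc m B0 * S); split; first by rewrite mulr_ge0 // Yc_ge0.
  move=> D L H; apply: c_step => // j jm n a an q.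
  by have [_ ] := HB D L H j jm; apply.
set B1 := Num.max B0 Bc.
have B01 : B0 <= B1 by rewrite /B1 le_max lexx.
have Bc1 : Bc <= B1 by rewrite /B1 le_max lexx orbT.
have B10 : 0 <= B1 by apply: le_trans B01.
set B := Num.max B1 (Yp m B1).
have B1B : B1 <= B by rewrite /B le_max lexx.
have BpB : Yp m B1 <= B by rewrite /B le_max lexx orbT.
exists B; split; first by apply: le_trans B1B.
move=> D L H.
have HP : forall j, (0 < j <= m)%N -> forall n a, (0 < a <= n)%N -> forall q,
    cl D (N - j) (B1 * a%:R ^+ j) (cmp (phist beta L j n a) q).
  move=> j jm n a an q; have [_ Hp] := HB D L H j jm.
  apply: cl_le (leqnn _) _ (Hp n a an q).
  by apply: ler_wpM2r => //; apply: exprn_ge0.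
have HC : forall j, (0 < j <= m.+1)%N -> forall n q, cl D (N - j) B1 (cmp (cmem beta L j n) q).
  move=> j /andP[j0]; rewrite leq_eqVlt => /orP[/eqP->|jm] n q.
    by apply: cl_le (leqnn _) Bc1 (HBc D L H n q).
  have jm2 : (0 < j <= m)%N by rewrite j0.
  have [Hc _] := HB D L H j jm2.
  exact: cl_le (leqnn _) B01 (Hc n q).
move=> j /andP[j0]; rewrite leq_eqVlt => /orP[/eqP->|jm].
  split.
    by move=> n q; apply: cl_le (leqnn _) B1B (HC m.+1 (leqnn _) n q).
  move=> n a an q; apply: cl_le (leqnn _) _ (p_step H mK B10 HC HP an q).
  by apply: ler_wpM2r => //; apply: exprn_ge0.
have jm' : (0 < j <= m)%N by rewrite j0.
split.
  by move=> n q; apply: cl_le (leqnn _) _ (HC j _ n q); [apply: B1B | rewrite j0 ltnW].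
move=> n a an q; apply: cl_le (leqnn _) _ (HP j jm' n a an q).
by apply: ler_wpM2r => //; apply: exprn_ge0.
Qed.

End Main.

Unset Implicit Arguments.
Set Strict Implicit.

Theorem mainTheorem3 (R : realType) (beta : R) (K d : nat) (M : R) :
  0 < beta < 1 -> (2 <= K)%N ->
  exists C : R,
  forall (D : set 'rV[R]_d) (L : nat -> 'rV[R]_d -> R),
    open D -> convexD D ->
    (forall s, CkOn (2 * K) D (L s)) ->
    (forall (s k : nat), (1 <= k <= 2 * K)%N ->
       forall theta, D theta ->
       forall us : seq 'rV[R]_d, seq.size us = k ->
         (forall u, u \in us -> enorm u <= 1) ->
         `|dirDer us (L s) theta| <= M) ->
    forall theta, D theta ->
    forall m r : nat, (1 <= m <= K)%N -> (r <= 2 * K - m)%N ->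
      (forall (n : nat) (us : seq 'rV[R]_d), seq.size us = r ->
         (forall u, u \in us -> enorm u <= 1) ->
         enorm (dirDer us (cmem beta L m n) theta) <= C) /\
      (forall (n a : nat) (us : seq 'rV[R]_d), (1 <= a <= n)%N ->
         seq.size us = r ->
         (forall u, u \in us -> enorm u <= 1) ->
         enorm (dirDer us (phist beta L m n a) theta) <= C * (a%:R) ^+ m).
Proof.
move=> /andP[hb0 hb1] K2.
have [B [B0 HB]] := main_ind d M hb0 hb1 K2 (leqnn K).
exists (d%:R * B).
move=> D L oD _ Ck Hb theta Dth m r mK rle.
have H : hypL K M D L by split.
have [HC HP] := HB D L H m mK.
split.
- move=> n us Hus uu.
  have sF : forall q, sm D r (cmp (cmem beta L m n) q).
    by move=> q; have [s _] := HC n q; apply: sm_le s.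
  apply: le_trans (enorm_le _) _.
  apply: le_trans (_ : \sum_(q < d) B <= _); last by rewrite sumr_const card_ord mulr_natl.
  apply: ler_sum => q _.
  have := @dirDer_comp _ _ D oD r (cmem beta L m n) us sF _ q theta Dth.
  rewrite /cmp => ->; last by rewrite Hus.
  by have [_ b] := HC n q; apply: b => //; rewrite Hus.
- move=> n a us an Hus uu.
  have sF : forall q, sm D r (cmp (phist beta L m n a) q).
    by move=> q; have [s _] := HP n a an q; apply: sm_le s.
  apply: le_trans (enorm_le _) _.
  apply: le_trans (_ : \sum_(q < d) (B * a%:R ^+ m) <= _).
    apply: ler_sum => q _.
    have := @dirDer_comp _ _ D oD r (phist beta L m n a) us sF _ q theta Dth.
    rewrite /cmp => ->; last by rewrite Hus.
    by have [_ b] := HP n a an q; apply: b => //; rewrite Hus.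
  by rewrite sumr_const card_ord -mulrA mulr_natl.
Qed.
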